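(* Let $S_X,S_Y$ be finite nonempty action sets, $\varphi:S_X\times S_Y\to\mathbb{R}$, and $\lambda\in[0,1)$. Suppose that $\sigma_X:\mathcal{H}\to\Delta(S_X)$ is a $(\varphi,\lambda)$-autocratic behavioral strategy for player $X$ (of arbitrary memory). Then there exists a two-point reactive learning strategy for $X$ that is also $(\varphi,\lambda)$-autocratic.
   Context: Two players $X,Y$ play a repeated game with finite action sets $S_X,S_Y$; $\Delta(S)$ denotes the probability distributions on $S$. $\varphi$ is extended to mixed actions in its first argument by $\varphi(\tau_X,s_Y)=\mathbb{E}_{s_X\sim\tau_X}[\varphi(s_X,s_Y)]$. Histories: $\mathcal{H}=\bigcup_{T\ge0}(S_X\times S_Y)^T$ (including the empty history). A behavioral strategy for $X$ is a map $\sigma_X:\mathcal{H}\to\Delta(S_X)$, and similarly for $Y$. In each round $t=0,1,2,\dots$ the players independently draw $s_X^t\sim\sigma_X[h^t]$ and $s_Y^t\sim\sigma_Y[h^t]$, where $h^t$ is the history of realized action pairs in rounds $0,\dots,t-1$; $\mathbb{E}_{\sigma_X,\sigma_Y}$ denotes expectation over the resulting random play. For $\lambda\in[0,1)$, $\sigma_X$ is $(\varphi,\lambda)$-autocratic if for every behavioral strategy $\sigma_Y$ of $Y$, $\mathbb{E}_{\sigma_X,\sigma_Y}\big[(1-\lambda)\sum_{t\ge0}\lambda^t\varphi(s_X^t,s_Y^t)\big]=0$. A reactive learning strategy for $X$ is a pair $(\sigma_X^0,\sigma_X^* )$ with $\sigma_X^0\in\Delta(S_X)$ and $\sigma_X^*:\Delta(S_X)\times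 S_Y\to\Delta(S_X)$; it is played by using the mixed action $\tau_X^0=\sigma_X^0$ in round $0$ and $\tau_X^{t+1}=\sigma_X^*[\tau_X^t,s_Y^t]$ in round $t+1$, where $s_Y^t$ is $Y$'s realized action in round $t$. It is a two-point reactive learning strategy if there exist $\tau_X^+,\tau_X^-\in\Delta(S_X)$, $p_0\in[0,1]$ and $p^*:[0,1]\times S_Y\to[0,1]$ such that $\sigma_X^0=p_0\tau_X^++(1-p_0)\tau_X^-$ and $\sigma_X^*[p\tau_X^++(1-p)\tau_X^-,s_Y]=p^*[p,s_Y]\tau_X^++(1-p^*[p,s_Y])\tau_X^-$ for all $p\in[0,1]$, $s_Y\in S_Y$ (so every mixed action played is a mixture of $\tau_X^+$ and $\tau_X^-$). *)

(* Defs.v *)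
From HB Require Import structures.
From mathcomp Require Import all_boot all_order all_algebra.
From mathcomp Require Import classical_sets reals topology normedtype sequences.
Set Implicit Arguments. Unset Strict Implicit. Unset Printing Implicit Defensive.
Import Order.TTheory GRing.Theory Num.Theory.
Import numFieldNormedType.Exports.
Local Open Scope classical_set_scope.
Local Open Scope ring_scope.

Section Game.
Variable R : realType.

Record dist (T : finType) := Dist {
  pmf :> {ffun T -> R};
  pmf_ge0 : forall t, 0 <= pmf t;
  pmf_sum1 : \sum_t pmf t = 1 }.

Variables SX SY : finType.

(* histories: finite sequences of realized action pairs (oldest first) *)
Definition history := seq (SX * SY).

Definition stratX := history -> dist SX.
Definition stratY := history -> dist SY.

Fixpoint prob_from (sX : stratX) (sY : stratY) (past fut : history) : R :=
  match fut with
  | [::] => 1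
  | ab :: f => sX past ab.1 * sY past ab.2 * prob_from sX sY (rcons past ab) f
  end.

Definition prob_hist sX sY (h : history) : R := prob_from sX sY [::] h.

Definition stage_payoff (phi : SX -> SY -> R) (sX : stratX) (sY : stratY)
  (h : history) : R :=
  \sum_a \sum_b sX h a * sY h b * phi a b.

Definition expected_stage phi sX sY (t : nat) : R :=
  \sum_(h : t.-tuple (SX * SY)) prob_hist sX sY h * stage_payoff phi sX sY h.

Definition disc_partial phi (lambda : R) sX sY (n : nat) : R :=
  (1 - lambda) * \sum_(t < n) lambda ^+ t * expected_stage phi sX sY t.

Definition autocratic phi (lambda : R) (sX : stratX) : Prop :=
  forall sY : stratY, disc_partial phi lambda sX sY @ \oo --> (0 : R).

(* reactive learning strategy (sigma0, sigma_star) played as a behavioral strategy: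
   tau^0 = sigma0, tau^{t+1} = sigma_star[tau^t, s_Y^t] *)
Definition reactive_strategy (s0 : dist SX) (ss : dist SX -> SY -> dist SX)
  : stratX :=
  fun h => foldl (fun tau ab => ss tau ab.2) s0 h.

Definition mixf (p : R) (a b : {ffun SX -> R}) : {ffun SX -> R} :=
  [ffun s => p * a s + (1 - p) * b s].

Definition two_point (s0 : dist SX) (ss : dist SX -> SY -> dist SX) : Prop :=
  exists (tp tm : dist SX) (p0 : R) (ps : R -> SY -> R),
    [/\ 0 <= p0 <= 1,
        (forall p sy, 0 <= p <= 1 -> 0 <= ps p sy <= 1),
        pmf s0 = mixf p0 tp tm &
        (forall (tau : dist SX) p sy, 0 <= p <= 1 ->
            pmf tau = mixf p tp tm -> pmf (ss tau sy) = mixf (ps p sy) tp tm)].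

End Game.

(* Main.v *)
Require Import Defs.
From HB Require Import structures.
From mathcomp Require Import all_boot all_order all_algebra.
From mathcomp Require Import boolp classical_sets reals topology normedtype sequences function_spaces.
From mathcomp Require Import ring lra.
Import Order.TTheory GRing.Theory Num.Theory.
Import numFieldNormedType.Exports.
Local Open Scope classical_set_scope.
Local Open Scope ring_scope.

Section Compact.
Variable R : realType.
Variables I J : finType.
Variables (A : J -> I -> R) (c : J -> R).
Local Notation T := (prod_topology (fun _ : I => R)).
Definition Sfe (e : R) : set T :=
  \bigcap_(i in [set: I]) [set x : T | 0 <= x i] `&`
  [set x : T | \sum_i x i = 1] `&`
  \bigcap_(j in [set: J]) [set x : T | c j - e <= \sum_i A j i * x i].
#[local] Instance nbhsT_pfilter (x : T) : ProperFilter (nbhs x) := @nbhs_pfilter _ x.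
#[local] Instance nbhsT_filter (x : T) : Filter (nbhs x) := @nbhs_filter _ x.
Lemma proj_cont i (x : T) : (fun y : T => y i) @ x --> x i.
Proof. exact: (@proj_continuous I (fun _ => R) i x). Qed.
Lemma lin_cont (w : I -> R) (x : T) : (fun y : T => \sum_i w i * y i) @ x --> \sum_i w i * x i.
Proof.
elim: (index_enum I) => [|i r IH].
  have -> : (fun y : T => \sum_(i <- [::]) w i * y i) = (fun=> 0).
    by apply: funext => y; rewrite big_nil.
  rewrite big_nil; exact: cvg_cst.
have -> : (fun y : T => \sum_(k <- i :: r) w k * y k) = (fun y : T => w i * y i + \sum_(k <- r) w k * y k).
  by apply: funext => y; rewrite big_cons.
rewrite big_cons.
Timeout 20 apply: cvgD => //. 
Timeout 20 apply: cvgM; [exact: cvg_cst| exact: proj_cont].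
Qed.

Lemma Sfe_closed e : closed (Sfe e).
Proof.
apply: closedI; [apply: closedI|].
- apply: closed_bigI => i _.
  apply: (@preimage_closed T R (fun x : T => x i) [set r | 0 <= r]); last exact: closed_ge.
  move=> x _; exact: proj_cont.
- apply: (@preimage_closed T R (fun x : T => \sum_i x i) [set r | r = 1]); last exact: closed_eq.
  move=> x _.
  have := lin_cont (fun _ => 1) x.
  have -> : (fun y : T => \sum_i 1 * y i) = (fun y : T => \sum_i y i).
    by apply: funext => y; under eq_bigr do rewrite mul1r.
  by under eq_bigr do rewrite mul1r.
- apply: closed_bigI => j _.
  apply: (@preimage_closed T R (fun x : T => \sum_i A j i * x i) [set r | c j - e <= r]); last exact: closed_ge.
  by move=> x _; apply: lin_cont.
Qed.

Lemma feasible_limit :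
  (forall e, 0 < e -> exists x : I -> R, [/\ forall i, 0 <= x i, \sum_i x i = 1 &
        forall j, c j - e <= \sum_i A j i * x i]) ->
  exists x : I -> R, [/\ forall i, 0 <= x i, \sum_i x i = 1 &
        forall j, c j <= \sum_i A j i * x i].
Proof.
move=> H.
pose F := filter_from [set e : R | 0 < e] Sfe.
have FF : Filter F.
  apply: filter_from_filter; first by exists 1; rewrite /= ltr01.
  move=> e1 e2 /= e1p e2p; exists (Num.min e1 e2); first by rewrite /= lt_min e1p.
  move=> x [[x0 xs] xc]; split.
    split; [split|] => // j _; apply: le_trans (xc j Logic.I).
    by rewrite lerD2l lerN2 ge_min lexx.
  split; [split|] => // j _; apply: le_trans (xc j Logic.I).
  by rewrite lerD2l lerN2 ge_min lexx orbT.
have PF : ProperFilter F.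
  apply: filter_from_proper => e /= ep.
  have [x [x0 xs xc]] := H e ep.
  exists x; split; [split|].
  - by move=> i _; exact: x0.
  - exact: xs.
  - by move=> j _; exact: xc.
have cube := @tychonoff I (fun _ => R) (fun _ => `[0, 1]%classic) (fun _ => @segment_compact R 0 1).
have Fcube : F [set f : T | forall i, `[0, 1]%classic (f i)].
  exists 1; first by rewrite /= ltr01.
  move=> x [[x0 xs] _] i.
  rewrite /= in_itv /= x0 //=.
  rewrite -xs (bigD1 i) //= lerDl sumr_ge0 // => k _; exact: x0.
have [p [_ clp]] := cube F PF Fcube.
have pS e : 0 < e -> Sfe e p.
  move=> ep; apply: Sfe_closed.
  by rewrite clusterE in clp; apply: clp; exists e.
exists p; have [[p0 ps] _] := pS 1 ltr01.
split=> [i|//|j]; first exact: p0.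
apply/ler_addgt0Pr => e ep.
have [_ /(_ j Logic.I)] := pS e ep.
move=> h; move: h => /=; rewrite lerBlDr; exact.
Qed.
End Compact.

Set Implicit Arguments. Unset Strict Implicit. Unset Printing Implicit Defensive.


Section Exp.
Variable R : realType.
Variables SX SY : finType.
Local Notation hist := (history SX SY).
Local Notation sXT := (stratX R SX SY).
Local Notation sYT := (stratY R SX SY).
Implicit Types (sx : sXT) (sy : sYT) (g : hist) (F : hist -> R).

Lemma sum_tupleS (T : finType) n (G : n.+1.-tuple T -> R) :
  \sum_(t : n.+1.-tuple T) G t = \sum_(x : T) \sum_(t : n.-tuple T) G (cons_tuple x t).
Proof.
rewrite pair_big /=.
rewrite (reindex (fun p : T * n.-tuple T => cons_tuple p.1 p.2)) //=.
exists (fun t : n.+1.-tuple T => (thead t, behead_tuple t)).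
  by move=> [x t] _ /=; congr pair; apply: val_inj.
move=> t _; apply: val_inj => /=.
by case: t => -[|x s] //=.
Qed.

Definition Eh (sx : sXT) (sy : sYT) (g : hist) n (F : hist -> R) :=
  \sum_(f : n.-tuple (SX * SY)) prob_from sx sy g f * F (g ++ f).

Lemma Eh0 sx sy g F : Eh sx sy g 0 F = F g.
Proof.
rewrite /Eh (big_pred1 [tuple]) /=; first by rewrite cats0 mul1r.
by move=> t; symmetry; apply/eqP; exact: tuple0.
Qed.

Lemma EhS sx sy g n F : Eh sx sy g n.+1 F =
  \sum_a \sum_b sx g a * sy g b * Eh sx sy (rcons g (a, b)) n F.
Proof.
rewrite /Eh sum_tupleS [RHS]pair_big /=; apply: eq_bigr => -[a b] _ /=.
rewrite mulr_sumr; apply: eq_bigr => t _ /=.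
by rewrite cat_rcons !mulrA.
Qed.

Lemma prob_from_ge0 sx sy g f : 0 <= prob_from sx sy g f.
Proof.
elim: f g => [|ab f IH] g /=; first exact: ler01.
by rewrite !mulr_ge0 // pmf_ge0.
Qed.

Lemma Eh_ge0 sx sy g n F : (forall h, 0 <= F h) -> 0 <= Eh sx sy g n F.
Proof. by move=> HF; apply: sumr_ge0 => t _; rewrite mulr_ge0 // prob_from_ge0. Qed.

Lemma EhD sx sy g n F1 F2 : Eh sx sy g n (fun h => F1 h + F2 h) = Eh sx sy g n F1 + Eh sx sy g n F2.
Proof. by rewrite /Eh -big_split; apply: eq_bigr => t _; rewrite mulrDr. Qed.

Lemma EhZ sx sy g n k F : Eh sx sy g n (fun h => k * F h) = k * Eh sx sy g n F.
Proof. by rewrite /Eh mulr_sumr; apply: eq_bigr => t _; rewrite mulrCA. Qed.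

Lemma EhN sx sy g n F : Eh sx sy g n (fun h => - F h) = - Eh sx sy g n F.
Proof. by rewrite /Eh -sumrN; apply: eq_bigr => t _; rewrite mulrN. Qed.

Lemma Eh_le sx sy g n F1 F2 : (forall h, F1 h <= F2 h) -> Eh sx sy g n F1 <= Eh sx sy g n F2.
Proof. by move=> H; apply: ler_sum => t _; rewrite ler_wpM2l // prob_from_ge0. Qed.

Lemma sum_pmf (T : finType) (d : dist R T) : \sum_t d t = 1.
Proof. exact: pmf_sum1. Qed.

Lemma Eh_cst sx sy g n k : Eh sx sy g n (fun _ => k) = k.
Proof.
elim: n g => [|n IH] g; first by rewrite Eh0.
rewrite EhS.
transitivity (\sum_a \sum_b sx g a * sy g b * k).
  by apply: eq_bigr => a _; apply: eq_bigr => b _; rewrite IH.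
rewrite -[RHS]mul1r -(pmf_sum1 (sx g)) mulr_suml; apply: eq_bigr => a _.
rewrite -[X in _ = _ * X]mul1r -(pmf_sum1 (sy g)) mulr_suml mulr_sumr.
by apply: eq_bigr => b _; rewrite mulrA.
Qed.

Lemma Eh_bound sx sy g n F B : (forall h, `|F h| <= B) -> `|Eh sx sy g n F| <= B.
Proof.
move=> H; rewrite ler_norml; apply/andP; split.
  rewrite -(Eh_cst sx sy g n (- B)); apply: Eh_le => h.
  by have := H h; rewrite ler_norml => /andP[].
rewrite -[X in _ <= X](Eh_cst sx sy g n B); apply: Eh_le => h.
by have := H h; rewrite ler_norml => /andP[].
Qed.

Lemma prob_from_ext sx sy sy' g f :
  (forall k, sy (g ++ k) = sy' (g ++ k)) -> prob_from sx sy g f = prob_from sx sy' g f.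
Proof.
elim: f g => [|ab f IH] g H //=.
rewrite (IH (rcons g ab)); last by move=> k; rewrite cat_rcons H.
by have := H [::]; rewrite cats0 => ->.
Qed.

Lemma Eh_ext sx sy sy' g n F F' :
  (forall k, sy (g ++ k) = sy' (g ++ k)) -> (forall k, F (g ++ k) = F' (g ++ k)) ->
  Eh sx sy g n F = Eh sx sy' g n F'.
Proof.
move=> H HF; apply: eq_bigr => t _.
by rewrite (prob_from_ext _ _ H) HF.
Qed.

End Exp.


Section Tele.
Variable R : realType.
Variables SX SY : finType.
Local Notation hist := (history SX SY).
Local Notation sXT := (stratX R SX SY).
Local Notation sYT := (stratY R SX SY).
Implicit Types (sx : sXT) (sy : sYT) (g : hist) (F W : hist -> R).

Lemma Eh_telescope sx sy (lam : R) F W :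
  (forall g, (1 - lam) * F g = W g - lam * \sum_a \sum_b sx g a * sy g b * W (rcons g (a, b))) ->
  forall n g, (1 - lam) * Eh sx sy g n F = Eh sx sy g n W - lam * Eh sx sy g n.+1 W.
Proof.
move=> H; elim=> [|n IH] g.
  rewrite !Eh0 H EhS; congr (_ - lam * _).
  by apply: eq_bigr => a _; apply: eq_bigr => b _; rewrite Eh0.
rewrite (EhS _ _ g n) (EhS _ _ g n.+1) (EhS _ _ g n) mulr_sumr mulr_sumr -sumrB.
apply: eq_bigr => a _; rewrite mulr_sumr mulr_sumr -sumrB; apply: eq_bigr => b _.
by rewrite mulrCA IH mulrBr mulrCA.
Qed.

Lemma disc_partial_tele (phi : SX -> SY -> R) (lam : R) sx sy W :
  (forall g, (1 - lam) * stage_payoff phi sx sy g =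
     W g - lam * \sum_a \sum_b sx g a * sy g b * W (rcons g (a, b))) ->
  forall n, disc_partial phi lam sx sy n = W [::] - lam ^+ n * Eh sx sy [::] n W.
Proof.
move=> H n.
rewrite /disc_partial mulr_sumr.
transitivity (\sum_(t < n) ((- (lam ^+ t.+1 * Eh sx sy [::] t.+1 W)) - (- (lam ^+ t * Eh sx sy [::] t W)))).
  apply: eq_bigr => t _.
  have -> : expected_stage phi sx sy t = Eh sx sy [::] t (stage_payoff phi sx sy).
  reflexivity.
  rewrite mulrCA (Eh_telescope H) exprS opprK.
  by rewrite mulrBr addrC mulrCA mulrA.
rewrite -(big_mkord xpredT (fun t => (- (lam ^+ t.+1 * Eh sx sy [::] t.+1 W)) - (- (lam ^+ t * Eh sx sy [::] t W)))).
rewrite telescope_sumr // expr0 mul1r Eh0 opprK addrC.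
by [].
Qed.

End Tele.


Lemma cvg_geo_bound (R : realType) (lam B : R) (u : nat -> R) :
  0 <= lam -> lam < 1 -> (forall n, `|u n| <= B) ->
  (fun n => lam ^+ n * u n) @ \oo --> (0 : R).
Proof.
move=> l0 l1 Hu.
have ge : (fun n => lam ^+ n) @ \oo --> (0 : R).
  by apply: cvg_expr; rewrite ger0_norm.
have h1 : (fun n => B * lam ^+ n) @ \oo --> (0 : R).
  by rewrite -(mulr0 B); apply: cvgM => //; exact: cvg_cst.
have h2 : (fun n => - (B * lam ^+ n)) @ \oo --> (0 : R).
  by rewrite -oppr0; apply: cvgN.
apply: (squeeze_cvgr _ h2 h1); apply: nearW => n.
have lp : 0 <= lam ^+ n by rewrite exprn_ge0.
have := Hu n; rewrite ler_norml => /andP[a b].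
apply/andP; split.
  by rewrite mulrC -mulrN ler_wpM2l.
by rewrite [B * _]mulrC ler_wpM2l.
Qed.

Section Phi.
Variable R : realType.
Variables SX SY : finType.
Variable phi : SX -> SY -> R.

Definition phiX (tau : {ffun SX -> R}) (y : SY) := \sum_a tau a * phi a y.

Lemma stage_phiX (tau : {ffun SX -> R}) (sig : {ffun SY -> R}) :
  \sum_a \sum_b tau a * sig b * phi a b = \sum_b sig b * phiX tau b.
Proof.
rewrite exchange_big; apply: eq_bigr => b _.
rewrite /phiX mulr_sumr; apply: eq_bigr => a _.
by rewrite mulrCA mulrA.
Qed.

Lemma sum2_indep (tau : dist R SX) (sig : {ffun SY -> R}) (G : SY -> R) :
  \sum_a \sum_b tau a * sig b * G b = \sum_b sig b * G b.
Proof.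
rewrite -[RHS]mul1r -(pmf_sum1 tau) mulr_suml; apply: eq_bigr => a _.
by rewrite mulr_sumr; apply: eq_bigr => b _; rewrite mulrA.
Qed.

Lemma phiX_mix r (a b : {ffun SX -> R}) y :
  phiX (mixf r a b) y = r * phiX a y + (1 - r) * phiX b y.
Proof.
rewrite /phiX !mulr_sumr -big_split; apply: eq_bigr => s _.
by rewrite ffunE mulrDl !mulrA.
Qed.

Definition clamp (p : R) := Num.max 0 (Num.min p 1).
Lemma clamp01 p : 0 <= clamp p <= 1.
Proof.
rewrite /clamp le_max lexx /= ge_max ler01 /= ge_min lexx orbT.
by [].
Qed.
Lemma clampE p : 0 <= p <= 1 -> clamp p = p.
Proof.
case/andP=> p0 p1; rewrite /clamp (min_l p1) (max_r p0).
by [].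
Qed.

Lemma mixf_ge0 p (a b : dist R SX) t : 0 <= p <= 1 -> 0 <= mixf p a b t.
Proof.
case/andP=> p0 p1; rewrite ffunE addr_ge0 // mulr_ge0 // ?pmf_ge0 //.
by rewrite subr_ge0.
Qed.

Lemma mixf_sum p (a b : dist R SX) : \sum_t mixf p a b t = 1.
Proof.
under eq_bigr do rewrite ffunE.
by rewrite big_split /= -!mulr_sumr !pmf_sum1 !mulr1 addrC subrK.
Qed.

Definition mixd (a b : dist R SX) (p : R) : dist R SX :=
  @Dist R SX (mixf (clamp p) a b) (fun t => mixf_ge0 a b t (clamp01 p)) (mixf_sum (clamp p) a b).

End Phi.


Section Const.
Variable R : realType.
Variables SX SY : finType.
Variable phi : SX -> SY -> R.
Variable lam : R.

Lemma const_construct (tau : dist R SX) : (forall y, phiX phi tau y = 0) ->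
  exists (s0 : dist R SX) (ss : dist R SX -> SY -> dist R SX),
    two_point s0 ss /\ autocratic phi lam (reactive_strategy s0 ss).
Proof.
move=> H0.
have mix0 : pmf tau = mixf 0 tau tau by apply/ffunP => a; rewrite ffunE mul0r subr0 mul1r add0r.
exists tau, (fun _ _ => tau); split.
  exists tau, tau, 0, (fun _ _ => 0); split => //.
  - by rewrite lexx ler01.
  - by move=> *; rewrite lexx ler01.
have sR h : reactive_strategy tau (fun _ _ => tau) h = tau.
  by rewrite /reactive_strategy; elim: h => //=.
move=> sy.
have -> : disc_partial phi lam (reactive_strategy tau (fun=> fun=> tau)) sy = fun=> 0.
  apply: funext => n; rewrite /disc_partial big1 ?mulr0 // => t _.
  rewrite /expected_stage big1 ?mulr0 // => h _.
  rewrite /stage_payoff sR stage_phiX big1 ?mulr0 // => b _.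
  by rewrite H0 mulr0.
exact: cvg_cst.
Qed.
End Const.

Lemma arith_q (R : realType) (lam M m p X Y : R) : 0 < lam -> m < M -> 0 <= p <= 1 ->
  (1 - lam) * M <= X <= M - lam * m -> m - lam * M <= Y <= (1 - lam) * m ->
  0 <= ((m + p * (M - m) - (p * X + (1 - p) * Y)) / lam - m) / (M - m) <= 1.
Proof.
move=> hl hmM /andP[p0' p1] /andP[X1 X2] /andP[Y1 Y2].
have e1 : 0 <= p * (M - X - lam * m) by rewrite mulr_ge0 //; lra.
have e2 : 0 <= (1 - p) * (m - Y - lam * m) by rewrite mulr_ge0 //; lra.
have e3 : 0 <= p * (X + lam * M - M) by rewrite mulr_ge0 //; lra.
have e4 : 0 <= (1 - p) * (Y + lam * M - m) by rewrite mulr_ge0 //; lra.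
set z := m + p * (M - m) - (p * X + (1 - p) * Y).
have z1 : lam * m <= z.
  rewrite -subr_ge0.
  have -> : z - lam * m = p * (M - X - lam * m) + (1 - p) * (m - Y - lam * m) by rewrite /z; ring.
  exact: addr_ge0.
have z2 : z <= lam * M.
  rewrite -subr_ge0.
  have -> : lam * M - z = p * (X + lam * M - M) + (1 - p) * (Y + lam * M - m) by rewrite /z; ring.
  exact: addr_ge0.
have hp : 0 < M - m by rewrite subr_gt0.
apply/andP; split.
  apply: divr_ge0; last exact: ltW.
  by rewrite subr_ge0 ler_pdivlMr // mulrC.
by rewrite ler_pdivrMr // mul1r lerBlDr subrK ler_pdivrMr // mulrC.
Qed.

Section Construct.
Variable R : realType.
Variables SX SY : finType.
Variable phi : SX -> SY -> R.
Variable lam : R.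
Hypothesis hl0 : 0 < lam.
Hypothesis hl1 : lam < 1.
Variables (tp tm : dist R SX) (M m : R).
Hypothesis hmM : m < M.
Hypothesis hm0 : m <= 0.
Hypothesis hM0 : 0 <= M.
Hypothesis Hp : forall y, (1 - lam) * M <= (1 - lam) * phiX phi tp y <= M - lam * m.
Hypothesis Hm : forall y, m - lam * M <= (1 - lam) * phiX phi tm y <= (1 - lam) * m.
Variable a0 : SX.
Hypothesis ha0 : tp a0 != tm a0.

Local Notation hist := (history SX SY).

Definition pc (tau : dist R SX) := (tau a0 - tm a0) / (tp a0 - tm a0).
Definition wv (p : R) := m + p * (M - m).
Definition qn (p : R) (y : SY) :=
  ((wv p - (1 - lam) * phiX phi (mixf p tp tm) y) / lam - m) / (M - m).
Definition p0 := - m / (M - m).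
Definition s0c := mixd tp tm p0.
Definition ssc (tau : dist R SX) (y : SY) := mixd tp tm (qn (pc tau) y).
Definition sR := reactive_strategy s0c ssc.

Lemma Mm0 : M - m != 0.
Proof. by rewrite subr_eq0 gt_eqF. Qed.
Lemma Mm_gt0 : 0 < M - m.
Proof. by rewrite subr_gt0. Qed.

Lemma pc_mix (tau : dist R SX) r : pmf tau = mixf r tp tm -> pc tau = r.
Proof.
move=> H; rewrite /pc H ffunE.
have h : tp a0 - tm a0 != 0 by rewrite subr_eq0.
apply: (mulIf h); rewrite mulrVK ?unitfE //.
by rewrite mulrBl mulrBr !mul1r; ring.
Qed.

Lemma p0_01 : 0 <= p0 <= 1.
Proof.
have hp := Mm_gt0.
rewrite /p0; apply/andP; split.
  by apply: divr_ge0; [rewrite oppr_ge0 | exact: ltW].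
have := hM0; rewrite ler_pdivrMr // mul1r; lra.
Qed.

Lemma qn01 p y : 0 <= p <= 1 -> 0 <= qn p y <= 1.
Proof.
move=> hp; rewrite /qn /wv.
have -> : (1 - lam) * phiX phi (mixf p tp tm) y =
   p * ((1 - lam) * phiX phi tp y) + (1 - p) * ((1 - lam) * phiX phi tm y).
  by rewrite phiX_mix; ring.
exact: (arith_q hl0 hmM hp (Hp y) (Hm y)).
Qed.

Lemma sR_rcons h ab : sR (rcons h ab) = ssc (sR h) ab.2.
Proof. by rewrite /sR /reactive_strategy foldl_rcons. Qed.

Lemma sR_mix h : exists2 r, 0 <= r <= 1 & pmf (sR h) = mixf r tp tm.
Proof.
case/lastP: h => [|h ab].
  by exists (clamp p0); [exact: clamp01|].
rewrite sR_rcons; exists (clamp (qn (pc (sR h)) ab.2)); [exact: clamp01|by []].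
Qed.

Definition Wc (g : hist) := wv (pc (sR g)).

Lemma Wc_bound g : `|Wc g| <= M - m.
Proof.
have [r r01 Hr] := sR_mix g; rewrite /Wc (pc_mix Hr) /wv.
case/andP: r01 => r0 r1.
have hp := Mm_gt0.
have : 0 <= r * (M - m) <= M - m.
  by apply/andP; split; [exact: (mulr_ge0 r0 (ltW hp)) | exact: (ler_piMl (ltW hp) r1)].
move=> hh; have := hm0; have := hM0; move: hh; rewrite ler_norml => /andP[h1 h2] ??; apply/andP; split; lra.

Qed.

Lemma W_step g a b : (1 - lam) * phiX phi (sR g) b = Wc g - lam * Wc (rcons g (a, b)).
Proof.
have [r r01 Hr] := sR_mix g.
rewrite /Wc sR_rcons /= (pc_mix Hr) /ssc (pc_mix Hr).
have -> : pc (mixd tp tm (qn r b)) = qn r b.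
  by apply: pc_mix; rewrite /= clampE // qn01.
rewrite Hr /qn /wv.
have h1 := Mm0; have h2 : lam != 0 by rewrite gt_eqF.
field; by rewrite h1 h2.
Qed.

Lemma Wc_rcons g a b : Wc (rcons g (a, b)) = Wc (rcons g (a0, b)).
Proof. by rewrite /Wc !sR_rcons. Qed.

Lemma stage_hyp (sy : stratY R SX SY) g :
  (1 - lam) * stage_payoff phi sR sy g =
     Wc g - lam * \sum_a \sum_b sR g a * sy g b * Wc (rcons g (a, b)).
Proof.
rewrite /stage_payoff stage_phiX mulr_sumr.
rewrite [X in Wc g - lam * X](eq_bigr (fun a => \sum_b sR g a * sy g b * Wc (rcons g (a0, b)))); last first.
  by move=> a _; apply: eq_bigr => b _; rewrite Wc_rcons.
rewrite (sum2_indep (sR g) (sy g) (fun b => Wc (rcons g (a0, b)))).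
have -> : Wc g = \sum_b sy g b * Wc g by rewrite -mulr_suml pmf_sum1 mul1r.
rewrite mulr_sumr -sumrB.
apply: eq_bigr => b _.
rewrite mulrCA (W_step g a0 b); ring.
Qed.

Lemma sR_auto : autocratic phi lam sR.
Proof.
move=> sy.
have := disc_partial_tele (stage_hyp sy).
move=> H; have -> : disc_partial phi lam sR sy = fun n => Wc [::] - lam ^+ n * Eh sR sy [::] n Wc.
  by apply: funext => n; rewrite H.
have -> : Wc [::] = 0.
  rewrite /Wc /sR /reactive_strategy /= /s0c.
  have -> : pc (mixd tp tm p0) = p0 by apply: pc_mix; rewrite /= clampE // p0_01.
  rewrite /wv /p0 divfK ?Mm0 //.
  by rewrite addrN.
have hb : (fun n => lam ^+ n * Eh sR sy [::] n Wc) @ \oo --> (0 : R).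
  apply: (@cvg_geo_bound R lam (M - m)); [exact: ltW|exact: hl1|].
  move=> n; apply: Eh_bound; exact: Wc_bound.
have := cvgB (cvg_cst (0 : R)) hb.
rewrite subr0; by move=> /(_ eventually_filter eventually_filter).
Qed.

Lemma construct_two_point : two_point s0c ssc.
Proof.
exists tp, tm, (clamp p0), (fun p y => clamp (qn p y)); split.
- exact: clamp01.
- by move=> *; exact: clamp01.
- by [].
- move=> tau p sy _ Hp'.
  by rewrite /ssc /= (pc_mix Hp').
Qed.

End Construct.


Lemma cvg_fsum (R : realType) (I : finType) (f : I -> nat -> R) (l : I -> R) :
  (forall i, f i @ \oo --> l i) -> (fun N => \sum_i f i N) @ \oo --> \sum_i l i.
Proof.
move=> H.
elim: (index_enum I) => [|i r IH].
  have -> : (fun N => \sum_(i <- [::]) f i N) = (fun=> 0).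
    by apply: funext => y; rewrite big_nil.
  rewrite big_nil; exact: cvg_cst.
have -> : (fun N => \sum_(k <- i :: r) f k N) = (fun N => f i N + \sum_(k <- r) f k N).
  by apply: funext => y; rewrite big_cons.
rewrite big_cons.
by apply: cvgD.
Qed.

Lemma pmf_le1 (R : realType) (T : finType) (d : dist R T) t : d t <= 1.
Proof.
rewrite -(pmf_sum1 d) (bigD1 t) //= lerDl sumr_ge0 // => *; exact: pmf_ge0.
Qed.

Section PM.
Variable R : realType.
Variable T : finType.
Lemma pm_ge0 (y : T) t : 0 <= ([ffun b => ((b == y)%:R : R)] t).
Proof. by rewrite ffunE ler0n. Qed.
Lemma pm_sum (y : T) : \sum_t ([ffun b => ((b == y)%:R : R)] t) = 1.
Proof.
rewrite (bigD1 y) //= ffunE eqxx big1 ?addr0 // => b /negbTE hb.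
by rewrite ffunE hb.
Qed.
Definition pm (y : T) : dist R T := @Dist R T [ffun b => (b == y)%:R] (@pm_ge0 y) (pm_sum y).
Lemma pmE y b : pm y b = (b == y)%:R.
Proof. by rewrite /= ffunE. Qed.
End PM.

Lemma exact_dist (R : realType) (SX SY : finType) (phi : SX -> SY -> R) (lam : R) (L U : SY -> R) :
  (forall e, 0 < e -> exists tau : dist R SX, forall y,
      L y - e <= (1 - lam) * phiX phi tau y <= U y + e) ->
  exists tau : dist R SX, forall y, L y <= (1 - lam) * phiX phi tau y <= U y.
Proof.
move=> H.
pose A (j : bool * SY) (a : SX) := if j.1 then (1 - lam) * phi a j.2 else - ((1 - lam) * phi a j.2).
pose c (j : bool * SY) := if j.1 then L j.2 else - U j.2.
have key (x : SX -> R) y : \sum_a (1 - lam) * phi a y * x a = (1 - lam) * \sum_a x a * phi a y.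
  by rewrite mulr_sumr; apply: eq_bigr => a _; rewrite mulrCA mulrC.
have keyN (x : SX -> R) y : \sum_a - ((1 - lam) * phi a y) * x a = - ((1 - lam) * \sum_a x a * phi a y).
  by rewrite -key -sumrN; apply: eq_bigr => a _; rewrite mulNr.
have Hf : forall e, 0 < e -> exists x : SX -> R, [/\ forall i, 0 <= x i, \sum_i x i = 1 &
        forall j, c j - e <= \sum_i A j i * x i].
  move=> e ep; have [tau Ht] := H e ep.
  exists (fun a => tau a); split.
  - by move=> a; exact: pmf_ge0.
  - exact: pmf_sum1.
  - move=> [[] y] /=; rewrite /A /c /=.
      by rewrite key; have := Ht y; case/andP.
    rewrite keyN; have := Ht y; case/andP => _ h2.
    rewrite lerBlDr -lerBlDl opprK; move: h2; rewrite /phiX.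
    move=> h2; rewrite addrC; lra.
have [x [x0 xs xc]] := @feasible_limit R SX (bool * SY)%type A c Hf.
have hx : forall t, 0 <= [ffun a => x a] t by move=> t; rewrite ffunE.
have hs : \sum_t [ffun a => x a] t = 1 by under eq_bigr do rewrite ffunE.
exists (@Dist R SX [ffun a => x a] hx hs) => y.
have c1 := xc (true, y); have c2 := xc (false, y).
rewrite /A /c /= in c1 c2.
rewrite key in c1; rewrite keyN lerNr opprK in c2.
rewrite /phiX /=; under eq_bigr do rewrite ffunE.
by rewrite c1 c2.
Qed.

Section Analysis.
Variable R : realType.
Variables SX SY : finType.
Variable phi : SX -> SY -> R.
Variable lam : R.
Hypothesis hl0 : 0 < lam.
Hypothesis hl1 : lam < 1.
Variable sX : stratX R SX SY.
Local Notation hist := (history SX SY).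
Local Notation sYT := (stratY R SX SY).
Implicit Types (sy : sYT) (g h : hist).

Definition stage sy := stage_payoff phi sX sy.
Definition Dn sy g (N : nat) := (1 - lam) * \sum_(t < N) lam ^+ t * Eh sX sy g t (stage sy).

Lemma DnE sy N : disc_partial phi lam sX sy N = Dn sy [::] N.
Proof. by []. Qed.

Definition Kst := \sum_a \sum_b `|phi a b|.

Lemma stage_bound sy h : `|stage sy h| <= Kst.
Proof.
rewrite /stage /stage_payoff /Kst.
apply: le_trans (ler_norm_sum _ _ _) _; apply: ler_sum => a _.
apply: le_trans (ler_norm_sum _ _ _) _; apply: ler_sum => b _.
rewrite !normrM -[X in _ <= X]mul1r ler_wpM2r //.
rewrite ger0_norm ?pmf_ge0 // ger0_norm ?pmf_ge0 //.
rewrite -[1]mul1r; apply: ler_pM; rewrite ?pmf_ge0 ?pmf_le1 //.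
Qed.

Lemma Kst_ge0 : 0 <= Kst.
Proof. by apply: sumr_ge0 => a _; apply: sumr_ge0 => b _. Qed.

Lemma DnS sy g N : Dn sy g N.+1 =
  (1 - lam) * stage sy g + lam * \sum_a \sum_b sX g a * sy g b * Dn sy (rcons g (a, b)) N.
Proof.
rewrite /Dn big_ord_recl /= expr0 mul1r Eh0 mulrDr; congr (_ + _).
transitivity (\sum_(t < N) \sum_a \sum_b (1 - lam) * lam ^+ t.+1 * (sX g a * sy g b) *
                 Eh sX sy (rcons g (a, b)) t (stage sy)).
  rewrite mulr_sumr; apply: eq_bigr => t _.
  rewrite /bump leq0n add1n EhS mulr_sumr mulr_sumr; apply: eq_bigr => a _.
  rewrite mulr_sumr mulr_sumr; apply: eq_bigr => b _; ring.
rewrite exchange_big mulr_sumr; apply: eq_bigr => a _.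
rewrite exchange_big mulr_sumr; apply: eq_bigr => b _.
rewrite mulr_sumr mulr_sumr mulr_sumr; apply: eq_bigr => t _.
rewrite exprS; ring.
Qed.



Lemma cvgB_seq (u v : nat -> R) a b : u @ \oo --> a -> v @ \oo --> b ->
  (fun n => u n - v n) @ \oo --> a - b.
Proof. by move=> ha hb; apply: cvgB. Qed.

Lemma lim_uniq (u : nat -> R) (a b : R) : u @ \oo --> a -> u @ \oo --> b -> a = b.
Proof. by move=> ha hb; apply: (cvg_unique (@Rhausdorff R) ha hb). Qed.

Lemma Eh_stage_bound sy g t : `|Eh sX sy g t (stage sy)| <= Kst.
Proof. apply: Eh_bound => h; exact: stage_bound. Qed.

Lemma Dn_cvg sy g : cvgn (Dn sy g).
Proof.
have -> : Dn sy g = series (fun t => (1 - lam) * (lam ^+ t * Eh sX sy g t (stage sy))).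
  by apply: funext => N; rewrite seriesEord /= /Dn mulr_sumr.
apply: normed_cvg.
apply: (@series_le_cvg _ _ (geometric Kst lam)).
- by move=> n; exact: normr_ge0.
- by move=> n; apply: geometric_ge0; [exact: Kst_ge0 | exact: ltW].
- move=> n; rewrite /geometric /= !normrM.
  have l1 : 0 <= 1 - lam by rewrite subr_ge0 ltW.
  have lp : 0 <= lam ^+ n by rewrite exprn_ge0 // ltW.
  rewrite (ger0_norm l1) (ger0_norm lp).
  rewrite mulrA [Kst * _]mulrC; apply: ler_pM.
  + exact: mulr_ge0.
  + exact: normr_ge0.
  + by rewrite ler_piMl // lerBlDr lerDl ltW.
  + exact: Eh_stage_bound.
- by apply: is_cvg_geometric_series; rewrite ger0_norm ?ltW.
Qed.

Definition C sy g := lim (Dn sy g @ \oo).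

Lemma Dn_to_C sy g : Dn sy g @ \oo --> C sy g.
Proof. exact: Dn_cvg. Qed.

Lemma C_rec sy g : C sy g =
  (1 - lam) * stage sy g + lam * \sum_a \sum_b sX g a * sy g b * C sy (rcons g (a, b)).
Proof.
have h1 : (fun N => Dn sy g N.+1) @ \oo --> C sy g.
  by rewrite (cvg_shiftS (Dn sy g)); exact: Dn_to_C.
have e : (fun N => Dn sy g N.+1) = (fun N => (1 - lam) * stage sy g +
   lam * \sum_a \sum_b sX g a * sy g b * Dn sy (rcons g (a, b)) N).
  by apply: funext => N; rewrite DnS.
rewrite e in h1; apply: (lim_uniq h1).
apply: cvgD; first exact: cvg_cst.
apply: cvgM; first exact: cvg_cst.
apply: cvg_fsum => a; apply: cvg_fsum => b.
apply: cvgM; first exact: cvg_cst.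
exact: Dn_to_C.
Qed.

Lemma Dn_bound sy g N : `|Dn sy g N| <= Kst.
Proof.
rewrite /Dn.
have l1 : 0 <= 1 - lam by rewrite subr_ge0 ltW.
apply: le_trans (_ : (1 - lam) * \sum_(t < N) lam ^+ t * Kst <= Kst).
  rewrite normrM ger0_norm //; apply: ler_wpM2l => //.
  apply: le_trans (ler_norm_sum _ _ _) _; apply: ler_sum => t _.
  have lp : 0 <= lam ^+ t by rewrite exprn_ge0 // ltW.
  rewrite normrM (ger0_norm lp); apply: ler_wpM2l => //.
  exact: Eh_stage_bound.
rewrite -mulr_suml mulrA.
have -> : (1 - lam) * \sum_(t < N) lam ^+ t = 1 - lam ^+ N.
  rewrite -(big_mkord xpredT (fun t => lam ^+ t)).
  elim: N => [|N IH]; first by rewrite big_geq // mulr0 expr0 subrr.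
  rewrite big_nat_recr //= mulrDr IH exprS; ring.
have lp : 0 <= lam ^+ N by rewrite exprn_ge0 // ltW.
apply: ler_piMl; [exact: Kst_ge0 | by rewrite lerBlDr lerDl].
Qed.

Lemma C_bound sy g : `|C sy g| <= Kst.
Proof.
rewrite ler_norml; apply/andP; split.
  apply: limr_ge; first exact: Dn_cvg.
  by apply: nearW => N; have := Dn_bound sy g N; rewrite ler_norml => /andP[].
apply: limr_le; first exact: Dn_cvg.
by apply: nearW => N; have := Dn_bound sy g N; rewrite ler_norml => /andP[].
Qed.


Lemma Dn_ext sy sy' g N : (forall k, sy (g ++ k) = sy' (g ++ k)) -> Dn sy g N = Dn sy' g N.
Proof.
move=> H; rewrite /Dn; congr (_ * _); apply: eq_bigr => t _; congr (_ * _).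
by apply: Eh_ext => // k; rewrite /stage /stage_payoff H.
Qed.

Lemma take_short (h k : hist) : (size k < size h)%N -> take (size h) k != h.
Proof.
move=> lt; rewrite take_oversize; last exact: ltnW.
apply/eqP => e.
by move: lt; rewrite e ltnn.
Qed.

Lemma take_branch g a b a' b' r f : (a', b') != (a, b) ->
  take (size (g ++ (a, b) :: r)) (rcons g (a', b') ++ f) != g ++ (a, b) :: r.
Proof.
move=> hne; apply/eqP => e.
have := congr1 (fun s => nth (a, b) s (size g)) e.
rewrite nth_take; last by rewrite size_cat /= addnS ltnS leq_addr.
rewrite -cats1 -catA !nth_cat ltnn subnn /= => e2.
by move: hne; rewrite e2 eqxx.
Qed.

Lemma Dn_diff h sya syb : (forall k, take (size h) k != h -> sya k = syb k) ->
  forall r g, h = g ++ r -> forall N,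
  Dn sya g (N + size r) - Dn syb g (N + size r) =
    prob_from sX sya g r * lam ^+ size r * (Dn sya h N - Dn syb h N).
Proof.
move=> Hab; elim=> [|[a b] r IH] g Hh N.
  by rewrite cats0 in Hh; subst; rewrite addn0 /= !mul1r.
have hg : take (size h) g != h.
  by apply: take_short; rewrite Hh size_cat /= addnS ltnS leq_addr.
have e1 : syb g = sya g by rewrite (Hab g hg).
have est : stage syb g = stage sya g by rewrite /stage /stage_payoff e1.
rewrite /= addnS !DnS est e1 opprD addrACA subrr add0r -mulrBr.
rewrite !pair_big /= -sumrB (bigD1 (a, b)) //= big1 ?addr0; last first.
  move=> [a' b'] hne /=.
  rewrite (@Dn_ext sya syb (rcons g (a', b'))) ?subrr // => k.
  by apply: Hab; rewrite Hh; apply: take_branch.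
rewrite -mulrBr (IH (rcons g (a, b))); last by rewrite cat_rcons.
by rewrite exprS; ring.
Qed.

Variable y0 : SY.
Definition Bh h : sYT := fun k => pm R (nth y0 (unzip2 h) (size k)).
Definition reach h := prob_from sX (Bh h) [::] h != 0.

Lemma prob_agree sy sy' g r :
  (forall i, (i < size r)%N -> sy (g ++ take i r) = sy' (g ++ take i r)) ->
  prob_from sX sy g r = prob_from sX sy' g r.
Proof.
elim: r g => [|ab r IH] g H //=.
have := H 0%N erefl; rewrite take0 cats0 => ->.
congr (_ * _); apply: IH => i hi.
by have := H i.+1 hi; rewrite /= cat_rcons.
Qed.

Lemma prob_from_rcons (sx : stratX R SX SY) sy g f ab :
  prob_from sx sy g (rcons f ab) = prob_from sx sy g f * sx (g ++ f) ab.1 * sy (g ++ f) ab.2.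
Proof.
elim: f g => [|x f IH] g /=; first by rewrite cats0 mulr1 mul1r.
by rewrite IH cat_rcons !mulrA.
Qed.

Lemma reach_nil : reach [::].
Proof. by rewrite /reach /= oner_neq0. Qed.

Lemma reach_child h a y : reach h -> sX h a != 0 -> reach (rcons h (a, y)).
Proof.
move=> hr ha; rewrite /reach prob_from_rcons /=.
have hsz : size (unzip2 h) = size h by rewrite size_map.
have -> : Bh (rcons h (a, y)) h y = 1.
  by rewrite /Bh pmE /unzip2 map_rcons nth_rcons size_map ltnn eqxx /= eqxx.
rewrite mulr1; apply: mulf_neq0 => //.
rewrite (@prob_agree _ (Bh h)) // => i hi.
rewrite /Bh /= size_take hi /unzip2 map_rcons nth_rcons -/(unzip2 h) hsz hi.
by [].
Qed.

Hypothesis hauto : autocratic phi lam sX.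

Lemma C_indep h sy2 sy3 : reach h -> C sy2 h = C sy3 h.
Proof.
move=> hr.
pose sya : sYT := fun k => if take (size h) k == h then sy2 k else Bh h k.
pose syb : sYT := fun k => if take (size h) k == h then sy3 k else Bh h k.
have Hab : forall k, take (size h) k != h -> sya k = syb k.
  by move=> k /negbTE hk; rewrite /sya /syb hk.
have Ha : forall k, sya (h ++ k) = sy2 (h ++ k) by move=> k; rewrite /sya take_size_cat // eqxx.
have Hb : forall k, syb (h ++ k) = sy3 (h ++ k) by move=> k; rewrite /syb take_size_cat // eqxx.
have HP : prob_from sX sya [::] h = prob_from sX (Bh h) [::] h.
  apply: prob_agree => i hi; rewrite /= /sya (negbTE (take_short _)) //.
  by rewrite size_take hi.
have hd := @Dn_diff h sya syb Hab h [::] erefl.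
have a1 : (fun N => Dn sya [::] (N + size h)) @ \oo --> (0 : R).
  by rewrite (cvg_shiftn (size h) (Dn sya [::])); exact: hauto.
have b1 : (fun N => Dn syb [::] (N + size h)) @ \oo --> (0 : R).
  by rewrite (cvg_shiftn (size h) (Dn syb [::])); exact: hauto.
have l1 := cvgB_seq a1 b1; rewrite subr0 in l1.
have ea : Dn sya h = Dn sy2 h by apply: funext => N; apply: Dn_ext.
have eb : Dn syb h = Dn sy3 h by apply: funext => N; apply: Dn_ext.
have l2 : (fun N => prob_from sX sya [::] h * lam ^+ size h * (Dn sya h N - Dn syb h N)) @ \oo -->
   prob_from sX sya [::] h * lam ^+ size h * (C sy2 h - C sy3 h).
  apply: cvgM; first exact: cvg_cst.
  by rewrite ea eb; apply: cvgB; exact: Dn_to_C.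
have e3 : (fun N => Dn sya [::] (N + size h) - Dn syb [::] (N + size h)) =
   (fun N => prob_from sX sya [::] h * lam ^+ size h * (Dn sya h N - Dn syb h N)).
  by apply: funext => N; rewrite hd.
rewrite e3 in l1.
have e := lim_uniq l1 l2.
have hP : prob_from sX sya [::] h != 0 by rewrite HP.
have hL : lam ^+ size h != 0 by rewrite expf_neq0 // gt_eqF.
move/eqP: e; rewrite eq_sym !mulf_eq0 (negbTE hP) (negbTE hL) /= subr_eq0.
by move/eqP.
Qed.


Definition Vf h := C (fun _ => pm R y0) h.

Lemma V_bellman h y : reach h ->
  Vf h = (1 - lam) * phiX phi (sX h) y + lam * \sum_a sX h a * Vf (rcons h (a, y)).
Proof.
move=> hr.
pose syy : sYT := fun k => if k == h then pm R y else pm R y0.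
rewrite /Vf (C_indep _ syy hr) C_rec.
have hs : syy h = pm R y by rewrite /syy eqxx.
congr (_ * _ + lam * _).
  rewrite /stage /stage_payoff hs stage_phiX (bigD1 y) //= big1 ?addr0.
    by rewrite pmE eqxx mul1r.
  by move=> b /negbTE hb; rewrite pmE hb mul0r.
apply: eq_bigr => a _.
rewrite hs (bigD1 y) //= big1 ?addr0; last first.
  by move=> b /negbTE hb; rewrite pmE hb mulr0 mul0r.
rewrite pmE eqxx mulr1.
have [->|ne] := eqVneq (sX h a) 0; first by rewrite !mul0r.
by rewrite (C_indep _ (fun _ => pm R y0) (reach_child y hr ne)).
Qed.

Lemma V_bound h : `|Vf h| <= Kst.
Proof. exact: C_bound. Qed.

Lemma V_nil : Vf [::] = 0.
Proof.
rewrite /Vf; apply: (lim_uniq (Dn_to_C (sy:=fun _ => pm R y0) (g:=[::]))).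
exact: hauto.
Qed.

Definition Vset : set R := [set x | exists2 h, reach h & x = Vf h].

Lemma Vset_n0 : Vset 0.
Proof. by exists [::]; [exact: reach_nil | rewrite V_nil]. Qed.

Lemma Vset_sup : has_sup Vset.
Proof.
split; first by exists 0; exact: Vset_n0.
exists Kst => x [h _ ->].
by have := V_bound h; rewrite ler_norml => /andP[].
Qed.

Lemma Vset_inf : has_inf Vset.
Proof.
split; first by exists 0; exact: Vset_n0.
exists (- Kst) => x [h _ ->].
by have := V_bound h; rewrite ler_norml => /andP[].
Qed.

Definition Mv := sup Vset.
Definition mv := inf Vset.

Lemma V_le_M h : reach h -> Vf h <= Mv.
Proof. by move=> hr; apply: sup_upper_bound; [exact: Vset_sup | exists h]. Qed.

Lemma V_ge_m h : reach h -> mv <= Vf h.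
Proof. by move=> hr; apply: ge_inf; [exact: (proj2 Vset_inf) | exists h]. Qed.

Lemma m_le0 : mv <= 0.
Proof. by rewrite -V_nil V_ge_m // reach_nil. Qed.
Lemma M_ge0 : 0 <= Mv.
Proof. by rewrite -V_nil V_le_M // reach_nil. Qed.

Lemma childsum_bounds h y : reach h ->
  mv <= \sum_a sX h a * Vf (rcons h (a, y)) <= Mv.
Proof.
move=> hr; apply/andP; split.
  rewrite -[mv]mul1r -(pmf_sum1 (sX h)) mulr_suml; apply: ler_sum => a _.
  have [->|ne] := eqVneq (sX h a) 0; first by rewrite !mul0r.
  by rewrite ler_wpM2l ?pmf_ge0 // V_ge_m // reach_child.
rewrite -[Mv]mul1r -(pmf_sum1 (sX h)) mulr_suml; apply: ler_sum => a _.
have [->|ne] := eqVneq (sX h a) 0; first by rewrite !mul0r.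
by rewrite ler_wpM2l ?pmf_ge0 // V_le_M // reach_child.
Qed.

Lemma exists_tp : exists tp : dist R SX,
  forall y, (1 - lam) * Mv <= (1 - lam) * phiX phi tp y <= Mv - lam * mv.
Proof.
apply: (@exact_dist R SX SY phi lam (fun _ => (1 - lam) * Mv) (fun _ => Mv - lam * mv)) => e ep.
have [x [h hr ->] hx] := sup_adherent ep Vset_sup.
exists (sX h) => y.
have hb := V_bellman y hr; have hs := childsum_bounds y hr.
move: hb hs; set S := \sum_a _ => hb hs.
have E : (1 - lam) * phiX phi (sX h) y = Vf h - lam * S by rewrite hb; ring.
have [s1 s2] := andP hs.
have t1 : lam * S <= lam * Mv by rewrite ler_wpM2l // ltW.
have t2 : lam * mv <= lam * S by rewrite ler_wpM2l // ltW.
have v1 := V_le_M hr.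
rewrite E; apply/andP; split; rewrite /Mv in hx v1 t1 *; lra.
Qed.

Lemma exists_tm : exists tm : dist R SX,
  forall y, mv - lam * Mv <= (1 - lam) * phiX phi tm y <= (1 - lam) * mv.
Proof.
apply: (@exact_dist R SX SY phi lam (fun _ => mv - lam * Mv) (fun _ => (1 - lam) * mv)) => e ep.
have [x [h hr ->] hx] := inf_adherent ep Vset_inf.
exists (sX h) => y.
have hb := V_bellman y hr; have hs := childsum_bounds y hr.
move: hb hs; set S := \sum_a _ => hb hs.
have E : (1 - lam) * phiX phi (sX h) y = Vf h - lam * S by rewrite hb; ring.
have [s1 s2] := andP hs.
have t1 : lam * S <= lam * Mv by rewrite ler_wpM2l // ltW.
have t2 : lam * mv <= lam * S by rewrite ler_wpM2l // ltW.
have v1 := V_ge_m hr.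
rewrite E; apply/andP; split; rewrite /mv in hx v1 t2 *; lra.
Qed.

End Analysis.

Unset Implicit Arguments.

Theorem theorem1 (R : realType) (SX SY : finType) (phi : SX -> SY -> R)
  (lambda : R) (hSX : (0 < #|SX|)%N) (hSY : (0 < #|SY|)%N)
  (hl0 : 0 <= lambda) (hl1 : lambda < 1)
  (sX : stratX R SX SY) (hauto : autocratic phi lambda sX) :
  exists (s0 : dist R SX) (ss : dist R SX -> SY -> dist R SX),
    two_point s0 ss /\ autocratic phi lambda (reactive_strategy s0 ss).
Proof.
have /card_gt0P [y0 _] := hSY.
have l1 : 0 < 1 - lambda by rewrite subr_gt0.
have [lz|lpos] : lambda = 0 \/ 0 < lambda.
  by move: hl0; rewrite le_eqVlt => /orP[/eqP <-|->]; [left|right].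
  subst lambda.
  apply: (@const_construct R SX SY phi 0 (sX [::])) => y.
  pose sy : stratY R SX SY := fun _ => pm R y.
  have hc := hauto sy.
  have e : (fun n => disc_partial phi 0 sX sy n.+1) = (fun=> phiX phi (sX [::]) y).
    apply: funext => n; rewrite /disc_partial subr0 mul1r big_ord_recl expr0 mul1r.
    rewrite big1 ?addr0; last by move=> i _; rewrite expr0n /= mul0r.
    have -> : expected_stage phi sX sy 0 = Eh sX sy [::] 0 (stage_payoff phi sX sy) by [].
    rewrite Eh0 /stage_payoff /sy stage_phiX (bigD1 y) //= big1 ?addr0.
      by rewrite pmE eqxx mul1r.
    by move=> b /negbTE hb; rewrite pmE hb mul0r.
  rewrite -(cvg_shiftS (disc_partial phi 0 sX sy)) e in hc.
  apply: esym; apply: (lim_uniq hc); exact: cvg_cst.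
have [tp Htp] := exists_tp lpos hl1 y0 hauto.
have [tm Htm] := exists_tm lpos hl1 y0 hauto.
have m0 := m_le0 lpos hl1 y0 hauto.
have M0 := M_ge0 lpos hl1 y0 hauto.
move: Htp Htm m0 M0.
set M := Mv phi lambda sX y0; set m := mv phi lambda sX y0 => Htp Htm m0 M0.
have [eMm|neMm] := eqVneq M m.
  have M00 : M = 0 by apply/eqP; rewrite eq_le M0 -eMm in m0 *; rewrite m0.
  apply: (@const_construct R SX SY phi lambda tp) => y.
  have := Htp y; rewrite -eMm M00 mulr0 mulr0 subr0 => /andP[a b].
  have : (1 - lambda) * phiX phi tp y = 0 by apply/eqP; rewrite eq_le a b.
  by move/eqP; rewrite mulf_eq0 (gt_eqF l1) /= => /eqP.
have mM : m < M by rewrite lt_neqAle eq_sym neMm /= (le_trans m0 M0).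
case: (pickP (fun a => tp a != tm a)) => [a0 ha0 | hall].
  exists (s0c tp tm M m), (ssc phi lambda tp tm M m a0); split.
    exact: (construct_two_point phi lambda M m ha0).
  exact: (sR_auto lpos hl1 mM m0 M0 Htp Htm ha0).
exfalso.
have eq : phiX phi tp y0 = phiX phi tm y0.
  apply: eq_bigr => a _; have := hall a; rewrite /= => /negbFE /eqP ->.
  by [].
have := Htp y0; have := Htm y0; rewrite eq => /andP[_ h1] /andP[h2 _].
have : (1 - lambda) * M <= (1 - lambda) * m := le_trans h2 h1.
rewrite ler_pM2l // => hh.
by move: mM; rewrite ltNge hh.
Qed.
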